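(* $m_2^{(2)}(5,3)=8$.
   Context: For a prime power $q$ and $N\ge1$, a multiset of points in $\mathrm{PG}(N,q)$ is a map $\mathcal{K}$ from the points to $\mathbb{Z}_{\ge0}$, with $\mathcal{K}(S)=\sum_{P\in S}\mathcal{K}(P)$; its cardinality is $\mathcal{K}(\mathrm{PG}(N,q))$. Dimensions are projective (planes have dimension 2). For $0\le r\le N-1$ and a positive integer $w$, $m_q^{(r)}(N,w)$ is the maximum cardinality of a multiset of points in $\mathrm{PG}(N,q)$ such that every $r$-dimensional subspace has multiplicity at most $w$. *)

(* Defs.v *)
From mathcomp Require Import all_boot all_order all_algebra.
Set Implicit Arguments. Unset Strict Implicit. Unset Printing Implicit Defensive.
Import GRing.Theory.

(* PG(N, F) for a finite field F: subspaces of (projective) dimension r are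
   represented by the set of vectors of the corresponding (r+1)-dimensional
   vector subspace of F^(N+1) (row vectors). *)

Definition proj_subspace (F : finFieldType) (N r : nat)
    (S : {set 'rV[F]_N.+1}) : bool :=
  [exists A : 'M[F]_(r.+1, N.+1),
     (\rank A == r.+1) && (S == [set v | (v <= A)%MS])].

Definition proj_point (F : finFieldType) (N : nat) (P : {set 'rV[F]_N.+1}) : bool :=
  @proj_subspace F N 0 P.

(* A multiset of points: a function assigning a multiplicity to each point
   (its values on non-points are irrelevant). *)
Definition multiset (F : finFieldType) (N : nat) := {set 'rV[F]_N.+1} -> nat.

Definition mult (F : finFieldType) (N : nat) (K : multiset F N)
    (S : {set 'rV[F]_N.+1}) : nat :=
  \sum_(P : {set 'rV[F]_N.+1} | proj_point P && (P \subset S)) K P.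

Definition mcard (F : finFieldType) (N : nat) (K : multiset F N) : nat :=
  mult K setT.

Definition admissible (F : finFieldType) (N r w : nat) (K : multiset F N) : Prop :=
  forall S, @proj_subspace F N r S -> mult K S <= w.

(* m is m_q^{(r)}(N, w) : the maximum cardinality of an admissible multiset *)
Definition is_m (F : finFieldType) (N r w m : nat) : Prop :=
  (exists K : multiset F N, admissible r w K /\ mcard K = m) /\
  (forall K : multiset F N, admissible r w K -> mcard K <= m).

(* Main.v *)
Require Import Defs.
From mathcomp Require Import all_boot all_order all_algebra zify.
Set Implicit Arguments. Unset Strict Implicit. Unset Printing Implicit Defensive.
Import GRing.Theory.
Local Open Scope ring_scope.

Lemma F2c (x : 'F_2) : x = 0 \/ x = 1.
Proof. case: x => [[|[|m]] Hm]; [left|right|]; try by apply/val_inj. by []. Qed.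
Lemma F2_11 : (1 + 1 : 'F_2) = 0. Proof. exact/val_inj. Qed.
Lemma F2_10 : (1 : 'F_2) != 0. Proof. by apply/eqP => /(congr1 val). Qed.

Lemma plane_ext (F : fieldType) m (U : 'M[F]_(m,6)) :
  (\rank U <= 3)%N -> exists A : 'M[F]_(3,6), \rank A = 3 /\ (U <= A)%MS.
Proof.
move=> hr; exists (pid_mx 3%N *m row_ebase U); split.
  by rewrite mxrankMfree ?row_free_unit ?row_ebase_unit // rank_pid_mx.
rewrite -{1}(mulmx_ebase U).
have -> : (pid_mx (\rank U) : 'M[F]_(m,6)) = (pid_mx (\rank U) : 'M[F]_(m,3)) *m (pid_mx 3%N : 'M_(3,6)).
  have e : minn 3 (minn (\rank U) 3) = \rank U by move: hr; clear; lia.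
  by rewrite mul_pid_mx e.
by rewrite !mulmxA -(mulmxA (col_ebase U *m _)); apply: submxMl.
Qed.

Lemma span1 (v : 'rV['F_2]_6) : [set u | (u <= v)%MS] = [set 0; v].
Proof.
apply/setP => u; rewrite !inE; apply/idP/idP.
  case/submxP => D ->; rewrite [D]mx11_scalar.
  by case: (F2c (D 0 0)) => ->; rewrite ?mul_scalar_mx ?scale0r ?scale1r eqxx ?orbT.
by case/orP => /eqP ->; rewrite ?sub0mx ?submx_refl.
Qed.

Lemma point_iff (P : {set 'rV['F_2]_6}) :
  @proj_point 'F_2 5 P <-> exists2 v, v != 0 & P = [set 0; v].
Proof.
split.
  case/existsP => A /andP [hr /eqP ->]; exists A; last exact: span1.
  by move: hr; rewrite rank_rV; case: (A != 0).
case=> v hv ->; apply/existsP; exists v; rewrite rank_rV hv span1 /=; exact/eqP.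
Qed.

Lemma set01_inj (v w : 'rV['F_2]_6) : v != 0 -> [set 0; v] = [set 0; w] -> v = w.
Proof.
move=> hv e; have : v \in [set 0; w] by rewrite -e !inE eqxx orbT.
by rewrite !inE (negbTE hv) /= => /eqP.
Qed.

Definition pk (P : {set 'rV['F_2]_6}) : 'rV['F_2]_6 := odflt 0 [pick x in P | x != 0].

Lemma pkE v : v != 0 -> pk [set 0; v] = v.
Proof.
move=> hv; rewrite /pk; case: pickP => [x | ] /=.
  by rewrite !inE => /andP [/orP [/eqP -> | /eqP ->]]; rewrite ?eqxx.
by move/(_ v); rewrite !inE eqxx orbT hv.
Qed.

Lemma mult_ptE (K : multiset 'F_2 5) (S : {set 'rV['F_2]_6}) : 0 \in S ->
  mult K S = (\sum_(v | (v != 0%R) && (v \in S)) K [set 0%R; v])%N.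
Proof.
move=> h0; rewrite /mult (reindex_onto (fun v => [set 0; v]) pk).
  apply: eq_bigl => v; case: (boolP (v == 0)) => [/eqP -> | hv] /=.
    apply/negbTE/negP => /andP [/andP [H1 _] _]. move: H1 => /point_iff [w hw e].
    by apply: (negP hw); apply/eqP; apply: set01_inj hw (esym e).
  rewrite pkE // eqxx andbT; apply/andP/idP.
    by case=> _ /subsetP; apply; rewrite !inE eqxx orbT.
  move=> hS; split; first by apply/point_iff; exists v.
  by apply/subsetP => u; rewrite !inE => /orP [] /eqP ->.
move=> P /andP [/point_iff [v hv ->] _]; by rewrite pkE.
Qed.
Lemma oppF2 n m (x : 'M['F_2]_(n,m)) : - x = x.
Proof.
apply/matrixP => i j; rewrite mxE; case: (F2c (x i j)) => ->; first by rewrite oppr0.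
by apply/eqP; rewrite eq_sym -subr_eq0 opprK F2_11.
Qed.

Definition wt n (c : 'rV['F_2]_n) : nat := (\sum_(i < n) (c ord0 i != 0%R))%N.

Lemma card_rV2 n : #|{: 'rV['F_2]_n}| = (2 ^ n)%N.
Proof. by rewrite card_mx card_ord mul1n. Qed.

Lemma wt_parity n (a b : 'rV['F_2]_n) :
  (wt a + wt b + wt (a + b) = 2 * \sum_(i < n) ((a ord0 i != 0%R) || (b ord0 i != 0%R)))%N.
Proof.
rewrite /wt -!big_split big_distrr /=; apply: eq_bigr => i _; rewrite mxE.
by case: (F2c (a ord0 i)) => ->; case: (F2c (b ord0 i)) => ->; rewrite ?addr0 ?add0r ?F2_11 ?eqxx ?F2_10.
Qed.

Lemma codeL (M : 'M['F_2]_(9,6)) :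
  (forall c : 'rV_9, c != 0 -> c *m M = 0 -> (5 <= wt c)%N) -> False.
Proof.
move=> hM.
pose C := [set c : 'rV['F_2]_9 | c *m M == 0].
have C0 : 0 \in C by rewrite inE mul0mx.
have CD : forall a b, a \in C -> b \in C -> a + b \in C.
  by move=> a b; rewrite !inE mulmxDl => /eqP -> /eqP ->; rewrite addr0.
have C8 : (8 <= #|C|)%N.
  pose Fy (y : 'rV['F_2]_6) := [set c : 'rV['F_2]_9 | c *m M == y].
  have hF : forall y, (#|Fy y| <= #|C|)%N.
    move=> y; case: (set_0Vmem (Fy y)) => [-> | [c0 hc0]]; first by rewrite cards0.
    rewrite -(card_imset _ (addIr (- c0))); apply: subset_leq_card.
    apply/subsetP => x /imsetP [c hc ->]; move: hc hc0; rewrite !inE mulmxDl => /eqP -> /eqP.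
    by rewrite mulNmx => ->; rewrite subrr.
  have : (\sum_(y : 'rV['F_2]_6) #|Fy y| = 2 ^ 9)%N.
    rewrite -card_rV2 -sum1_card (partition_big (fun c => c *m M) xpredT) //=.
    by apply: eq_bigr => y _; rewrite -sum1_card; apply: eq_bigl => c; rewrite inE.
  move=> hs; have : (2 ^ 9 <= \sum_(y : 'rV['F_2]_6) #|C|)%N.
    by rewrite -hs; apply: leq_sum => y _; apply: hF.
  by rewrite sum_nat_const card_rV2; lia.
have hi : forall i, (2 * #|[set c in C | c ord0 i != 0%R]| <= #|C|)%N.
  move=> i; case: (boolP [exists b in C, b ord0 i != 0%R]) => [/existsP [b /andP [hb hbi]] | hn].
    have : (#|[set c in C | c ord0 i != 0%R]| <= #|[set c in C | c ord0 i == 0%R]|)%N.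
      rewrite -(card_imset _ (addIr b)); apply: subset_leq_card.
      apply/subsetP => x /imsetP [c hc ->]; move: hc; rewrite inE => /andP [hc hci].
      rewrite inE CD //= mxE; move: hci hbi.
      by case: (F2c (c ord0 i)) => ->; case: (F2c (b ord0 i)) => ->; rewrite ?eqxx ?F2_11.
    have := cardsID [set c : 'rV['F_2]_9 | c ord0 i != 0%R] C.
    have -> : C :&: [set c : 'rV['F_2]_9 | c ord0 i != 0%R] = [set c in C | c ord0 i != 0%R].
      by apply/setP => c; rewrite !inE.
    have -> : C :\: [set c : 'rV['F_2]_9 | c ord0 i != 0%R] = [set c in C | c ord0 i == 0%R].
      by apply/setP => c; rewrite !inE negbK andbC.
    lia.
  have -> : [set c in C | c ord0 i != 0%R] = set0.
    apply/setP => c; rewrite inE in_set0; apply/negbTE/negP => /andP [hc hci].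
    by move/existsP: hn; apply; exists c; rewrite hc hci.
  by rewrite cards0.
have hsum : (2 * \sum_(c in C) wt c <= 9 * #|C|)%N.
  rewrite /wt (exchange_big_dep xpredT) //= big_distrr /=.
  apply: (@leq_trans (\sum_(i < 9) #|C|)); last by rewrite sum_nat_const card_ord.
  apply: leq_sum => i _.
  apply: leq_trans (hi i); rewrite leq_mul2l /= -sum1_card big_mkcond /= [X in (_ <= X)%N]big_mkcond /=.
  apply: leq_sum => c _; rewrite andbT (_ : (c \in [set c0 in C | c0 ord0 i != 0%R]) = (c \in C) && (c ord0 i != 0%R)); last by rewrite inE.
  by case: (c \in C); case: (c ord0 i != 0%R).
pose Y := [set c in C | (c != 0%R) && (wt c != 5%N)].
have hlow : (5 * (#|C| - 1) + #|Y| <= \sum_(c in C) wt c)%N.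
  have -> : (#|C| - 1 = \sum_(c in C) (c != 0%R))%N.
    rewrite (cardD1 0) C0 add1n subSS subn0 -sum1_card big_mkcond /= [RHS]big_mkcond /=.
    by apply: eq_bigr => c _; rewrite [c \in [predD1 _ & _]]inE andbC; case: (c \in C).
  have -> : #|Y| = (\sum_(c in C) (c \in Y))%N.
    rewrite -sum1_card big_mkcond /= [RHS]big_mkcond /=.
    by apply: eq_bigr => c _; rewrite [c \in Y]inE; case: (c \in C).
  rewrite big_distrr -big_split /=; apply: leq_sum => c hc.
  rewrite [c \in Y]inE hc /=; case: (boolP (c == 0)) => [/eqP -> | hc0] //=.
  have h5 : c *m M = 0 by move: hc; rewrite inE => /eqP.
  have := hM c hc0 h5; case: eqP => [-> | ?] /=; lia.
have hY : (#|Y| <= 1)%N by lia.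
have [a ha] : exists a, a \in C :\: (0 |: Y).
  apply/set0Pn; rewrite -card_gt0 cardsD subn_gt0; apply: leq_trans C8; rewrite ltnS.
  apply: leq_trans (subset_leq_card (subsetIr _ _)) _; rewrite cardsU1.
  by apply: leq_trans (leq_add (leq_b1 _) hY) _.
pose Z := [set 0; a] :|: Y :|: [set a + y | y in Y].
have [b hb] : exists b, b \in C :\: Z.
  apply/set0Pn; rewrite -card_gt0 cardsD subn_gt0; apply: leq_trans C8; rewrite ltnS.
  apply: leq_trans (subset_leq_card (subsetIr _ _)) _.
  apply: leq_trans (leq_card_setU _ _) _.
  apply: leq_trans (leq_add (leq_card_setU _ _) (leq_imset_card _ _)) _.
  apply: leq_trans (leq_add (leq_add (leq_card_setU _ _) hY) hY) _.
  by rewrite !cards1.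
move: ha; rewrite in_setD in_setU1 negb_or => /andP [/andP [ha0 haY] haC].
move: hb; rewrite in_setD => /andP [hbZ hbC].
move: hbZ; rewrite !in_setU !in_set1 !negb_or => /andP [/andP [/andP [hb0 hba] hbY] hbaY].
have w5 : forall c, c \in C -> c != 0 -> c \notin Y -> wt c = 5%N.
  by move=> c hc hc0; rewrite [c \in Y]inE hc hc0 /= negbK => /eqP.
have hab : a + b \in C by apply: CD.
have hab0 : a + b != 0.
  apply/negP; rewrite addr_eq0 oppF2 => /eqP e; by rewrite e eqxx in hba.
have habY : a + b \notin Y.
  apply/negP => hy; move/imsetP: hbaY; apply; exists (a + b) => //.
  by rewrite addrA -{1}(oppF2 a) addNr add0r.
have := wt_parity a b; rewrite (w5 a) // (w5 b) // (w5 (a + b)) //; lia.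
Qed.

Lemma pick4 n (T1 T2 : {set 'I_n}) : T1 \subset T2 -> (#|T1| <= 4 <= #|T2|)%N ->
  exists f : 'I_4 -> 'I_n, [/\ injective f, forall i, f i \in T2 & forall j, j \in T1 -> exists i, f i = j].
Proof.
move=> s12 /andP [h1 h2].
have [j0 _] : exists j0, j0 \in T2 by apply/set0Pn; rewrite -card_gt0; lia.
pose s := enum T1 ++ take (4 - #|T1|) (enum (T2 :\: T1)).
have hD : #|T2 :\: T1| = (#|T2| - #|T1|)%N by rewrite cardsD (setIidPr s12).
have ss : size s = 4%N.
  rewrite size_cat size_take -!cardE hD; case: ifP; lia.
have us : uniq s.
  rewrite cat_uniq enum_uniq take_uniq ?enum_uniq // andbT /=.
  apply/hasPn => x /mem_take; rewrite mem_enum inE => /andP [hx _].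
  by rewrite mem_enum.
have ins : forall x, x \in s -> x \in T2.
  move=> x; rewrite mem_cat mem_enum => /orP [/(subsetP s12) //|/mem_take].
  by rewrite mem_enum inE => /andP [].
exists (fun i => nth j0 s i); split.
- move=> i k /eqP; rewrite nth_uniq ?ss ?ltn_ord // => /eqP; exact: val_inj.
- by move=> i; apply: ins; apply: mem_nth; rewrite ss.
- move=> j hj; have : j \in s by rewrite mem_cat mem_enum hj.
  move=> js; have hi : (index j s < 4)%N by rewrite -ss index_mem.
  by exists (Ordinal hi); rewrite /= nth_index.
Qed.

Lemma rowsub1E n (f : 'I_4 -> 'I_n) (x : 'rV['F_2]_4) j :
  (x *m rowsub f 1%:M) ord0 j = \sum_i x ord0 i * (f i == j)%:R.
Proof. by rewrite !mxE; apply: eq_bigr => i _; rewrite !mxE. Qed.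

Lemma rowsub1E_inj n (f : 'I_4 -> 'I_n) (x : 'rV['F_2]_4) i0 : injective f ->
  (x *m rowsub f 1%:M) ord0 (f i0) = x ord0 i0.
Proof.
move=> fi; rewrite rowsub1E (bigD1 i0) //= eqxx mulr1 big1 ?addr0 // => i hi.
by rewrite (inj_eq fi) (negbTE hi) mulr0.
Qed.

Lemma rowsub1E_out n (f : 'I_4 -> 'I_n) (x : 'rV['F_2]_4) j :
  (forall i, f i != j) -> (x *m rowsub f 1%:M) ord0 j = 0.
Proof.
by move=> h; rewrite rowsub1E big1 // => i _; rewrite (negbTE (h i)) mulr0.
Qed.

Lemma wt_rowsub n (f : 'I_4 -> 'I_n) (x : 'rV['F_2]_4) : injective f ->
  (wt (x *m rowsub f 1%:M) <= 4)%N.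
Proof.
move=> fi; rewrite /wt; apply: (@leq_trans (\sum_(j < n) (j \in codom f))).
  apply: leq_sum => j _; case: (boolP (j \in codom f)) => [_ | h]; first exact: leq_b1.
  have h' : forall i, f i != j.
    by move=> i; apply/eqP => e; rewrite -e codom_f in h.
  by rewrite rowsub1E_out // eqxx.
have -> : (\sum_(j < n) (j \in codom f) = #|codom f|)%N.
  by rewrite -sum1_card [RHS]big_mkcond; apply: eq_bigr => j _; case: (j \in codom f).
by rewrite card_codom // card_ord.
Qed.

Lemma dep_of_plane n (W : 'M['F_2]_(n,6)) (A : 'M['F_2]_(3,6)) (f : 'I_4 -> 'I_n) :
  injective f -> (forall i, (row (f i) W <= A)%MS) -> \rank A = 3%N ->
  exists c : 'rV_n, [/\ c != 0, c *m W = 0 & (wt c <= 4)%N].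
Proof.
move=> fi hr hA.
have hB : (rowsub f W <= A)%MS by apply/row_subP => i; rewrite row_rowsub.
have nf : ~~ row_free (rowsub f W).
  rewrite /row_free; apply/negP => /eqP e; have := mxrankS hB; rewrite e hA //.
rewrite -kermx_eq0 in nf; case/rowV0Pn: nf => x hx x0.
have xB : x *m rowsub f W = 0 by apply/sub_kermxP.
exists (x *m rowsub f 1%:M); split.
- apply: contra x0 => /eqP e; apply/eqP/rowP => i; rewrite -(rowsub1E_inj x i fi) e !mxE //.
- by rewrite -mulmxA -rowsubE.
- exact: wt_rowsub.
Qed.

Lemma plane_of_dep n (M : 'M['F_2]_(n,6)) (c : 'rV_n) :
  (4 <= n)%N -> c != 0 -> c *m M = 0 -> (wt c <= 4)%N ->
  exists A : 'M['F_2]_(3,6), \rank A = 3%N /\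
    exists f : 'I_4 -> 'I_n, injective f /\ forall i, (row (f i) M <= A)%MS.
Proof.
move=> n4 c0 cM cw.
pose T1 := [set j | c ord0 j != 0].
have hT1 : #|T1| = wt c.
  by rewrite -sum1_card big_mkcond /wt; apply: eq_bigr => j _; rewrite inE; case: (_ != _).
have [f [fi _ fT]] : exists f : 'I_4 -> 'I_n, [/\ injective f, forall i, f i \in [set: 'I_n]
     & forall j, j \in T1 -> exists i, f i = j].
  by apply: pick4; rewrite ?subsetT // cardsT card_ord hT1 cw.
pose x := \row_i c ord0 (f i).
have cx : c = x *m rowsub f 1%:M.
  apply/rowP => j; case: (boolP [exists i, f i == j]) => [/existsP [i /eqP <-] | hn].
    by rewrite rowsub1E_inj // mxE.
  rewrite rowsub1E_out; last by move=> i; apply: contraNneq hn => e; apply/existsP; exists i; rewrite e.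
  apply/eqP; apply: contraNT hn => hj; have : j \in T1 by rewrite inE.
  by case/fT => i e; apply/existsP; exists i; rewrite e.
have xB : x *m rowsub f M = 0 by rewrite rowsubE mulmxA -cx.
have x0 : x != 0 by apply: contra c0 => /eqP x0; rewrite cx x0 mul0mx.
have nf : ~~ row_free (rowsub f M).
  by apply/negP => /row_free_inj h; move: x0; rewrite (h 1%N x 0) ?eqxx // xB mul0mx.
have r3 : (\rank (rowsub f M) <= 3)%N.
  move: nf; rewrite /row_free; have := rank_leq_row (rowsub f M); lia.
have [A [hA BA]] := plane_ext r3.
exists A; split => //; exists f; split => // i.
by rewrite -row_rowsub; apply: submx_trans BA; apply: row_sub.
Qed.

Lemma upper (K : multiset 'F_2 5) : admissible 2 3 K -> (mcard K <= 8)%N.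
Proof.
move=> adm; rewrite /mcard mult_ptE ?inE //.
pose k v := K [set 0; v].
pose s := flatten [seq nseq (k v) v | v <- enum (predC1 (0 : 'rV['F_2]_6))].
have cnt : forall a : pred 'rV['F_2]_6, count a s = (\sum_(v | (v != 0%R) && a v) k v)%N.
  move=> a; rewrite count_flatten -map_comp sumnE big_map big_enum /=.
  rewrite big_mkcond [RHS]big_mkcond /=; apply: eq_bigr => v _.
  by rewrite count_nseq inE; case: (v != 0); case: (a v) => //=; rewrite mul1n.
have -> : (\sum_(v | (v != 0%R) && (v \in [set: 'rV_6])) K [set 0%R; v])%N = size s.
  by rewrite -count_predT cnt; apply: eq_bigl => v; rewrite inE.
rewrite leqNgt; apply/negP => s9.
pose M := \matrix_(j < 9, l < 6) (nth 0 s j) ord0 l.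
have rM : forall j, row j M = nth 0 s j by move=> j; apply/rowP => l; rewrite !mxE.
apply: (codeL (M := M)) => c c0 cM; rewrite leqNgt; apply/negP => cw.
have [A [hA [f [fi hf]]]] := plane_of_dep (erefl : (4 <= 9)%N) c0 cM cw.
pose S := [set v : 'rV['F_2]_6 | (v <= A)%MS].
have pS : @proj_subspace 'F_2 5 2 S by apply/existsP; exists A; rewrite hA; apply/andP; split; apply/eqP.
have := adm S pS; rewrite mult_ptE ?inE ?sub0mx // -/k -cnt.
rewrite -sum1_count (big_nth (0 : 'rV['F_2]_6)) (big_cat_nat _ (n := 9)) //=.
move=> h; suff H : (4 <= \sum_(0 <= i < 9 | nth 0%R s i \in S) 1)%N by have := leq_trans H (leq_trans (leq_addr _ _) h).
rewrite big_mkord.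
have -> : (\sum_(i < 9 | nth 0%R s i \in S) 1 = #|[pred i : 'I_9 | nth 0%R s i \in S]|)%N.
  by rewrite -sum1_card.
apply: (@leq_trans #|codom f|); first by rewrite card_codom // card_ord.
apply: subset_leq_card.
apply/subsetP => j /codomP [i ->]; rewrite inE -rM inE; exact: hf.
Qed.

Definition a6 : 'rV['F_2]_6 := \row_(k < 6) ((k < 4)%N : nat)%:R.
Definition b6 : 'rV['F_2]_6 := \row_(k < 6) ((2 <= k)%N : nat)%:R.
Definition W0 : 'M['F_2]_(6 + (1 + 1), 6) := col_mx 1%:M (col_mx a6 b6).

Lemma natb (b : bool) : (((b : nat)%:R : 'F_2) != 0) = b.
Proof. by case: b; rewrite ?F2_10 ?eqxx. Qed.

Lemma wt_a6 : wt a6 = 4%N.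
Proof. by rewrite /wt !big_ord_recr big_ord0 /= !mxE !natb. Qed.
Lemma wt_b6 : wt b6 = 4%N.
Proof. by rewrite /wt !big_ord_recr big_ord0 /= !mxE !natb. Qed.
Lemma wt_ab6 : wt (a6 + b6) = 4%N.
Proof.
rewrite /wt !big_ord_recr big_ord0 /= !mxE /=.
by rewrite ?addr0 ?add0r ?F2_11 ?F2_10 ?eqxx.
Qed.

Lemma wt_row_mx n1 n2 (u : 'rV['F_2]_n1) (v : 'rV['F_2]_n2) :
  wt (row_mx u v) = (wt u + wt v)%N.
Proof. by rewrite /wt big_split_ord /=; congr addn; apply: eq_bigr => i _; rewrite ?row_mxEl ?row_mxEr. Qed.

Lemma wt1 (s : 'rV['F_2]_1) : wt s = (s ord0 ord0 != 0).
Proof. by rewrite /wt big_ord1. Qed.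

Lemma W0code c : c != 0 -> c *m W0 = 0 -> (5 <= wt c)%N.
Proof.
rewrite -[c]hsubmxK -[rsubmx c]hsubmxK /W0 !mul_row_col mulmx1.
set u := lsubmx c; set s := lsubmx (rsubmx c); set t := rsubmx (rsubmx c).
rewrite [s]mx11_scalar [t]mx11_scalar; move: (s 0 0) (t 0 0) => x y.
rewrite !mul_scalar_mx !wt_row_mx !wt1 !mxE /= !mulr1n.
move=> hc0 /eqP; rewrite addr_eq0 oppF2 => /eqP e; rewrite e in hc0 *.
move: hc0; case: (F2c x) => ->; case: (F2c y) => ->;
  rewrite ?scale0r ?scale1r ?addr0 ?add0r ?eqxx ?F2_10 /= ?wt_a6 ?wt_b6 ?wt_ab6 //.
have z : (0 : 'F_2)%:M = 0 :> 'M_1 by apply/matrixP => i j; rewrite !mxE mul0rn.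
by rewrite z !row_mx0 eqxx.
Qed.

Lemma wnz i : row i W0 != 0.
Proof.
apply/negP => /eqP h.
have := W0code (c := delta_mx 0 i); rewrite -rowE h => /(_ _ erefl).
have -> : wt (delta_mx 0 i : 'rV['F_2]_(6 + (1 + 1))) = 1%N.
  rewrite /wt (bigD1 i) //= big1 => [|j hj]; rewrite !mxE natb.
    by rewrite eqxx andbT.
  by rewrite (negbTE hj) andbF.
move=> H; suff : (delta_mx 0 i : 'rV['F_2]_(6 + (1 + 1))) != 0 by move=> hh; have := H hh.
apply/negP => /eqP /matrixP /(_ 0 i) /eqP; apply/negP.
by rewrite !mxE natb !eqxx.
Qed.

Lemma inner (S : {set 'rV['F_2]_6}) w : w != 0 ->
  (\sum_(v | (v != 0%R) && (v \in S)) ([set 0%R; v] == [set 0%R; w]))%N = (w \in S).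
Proof.
move=> w0; case: (boolP (w \in S)) => hw.
  rewrite (bigD1 w) /= ?w0 ?hw // eqxx big1 // => v /andP [/andP [v0 _] vw].
  by case: eqP => // e; move: vw; rewrite (set01_inj v0 e) eqxx.
rewrite big1 // => v /andP [v0 vS]; case: eqP => // e.
by move: hw; rewrite -(set01_inj v0 e) vS.
Qed.

Definition K0 : multiset 'F_2 5 :=
  fun P => (\sum_(i < 6 + (1 + 1)) (P == [set 0%R; row i W0]))%N.

Lemma multK0 (S : {set 'rV['F_2]_6}) : 0 \in S ->
  mult K0 S = (\sum_(i < 6 + (1 + 1)) (row i W0 \in S))%N.
Proof.
move=> h0; rewrite mult_ptE // /K0 exchange_big /=; apply: eq_bigr => i _.
exact: inner (wnz i).
Qed.

Lemma lower_card : mcard K0 = 8%N.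
Proof.
rewrite /mcard multK0 ?inE //.
by rewrite (eq_bigr (fun _ => 1%N)) ?sum_nat_const ?card_ord // => i _; rewrite inE.
Qed.

Lemma lower_adm : admissible 2 3 K0.
Proof.
move=> S /existsP [A /andP [/eqP hA /eqP ->]].
rewrite multK0 ?inE ?sub0mx //.
rewrite leqNgt; apply/negP => h4.
pose T := [set i | row i W0 \in [set v : 'rV['F_2]_6 | (v <= A)%MS]].
have hT : #|T| = (\sum_(i < 6 + (1 + 1)) (row i W0 \in [set v : 'rV['F_2]_6 | (v <= A)%MS]))%N.
  rewrite -sum1_card big_mkcond /=; apply: eq_bigr => i _; rewrite !inE.
  by case: (row i W0 <= A)%MS.
have [f [fi fT _]] : exists f : 'I_4 -> 'I_(6 + (1 + 1)),
   [/\ injective f, forall i, f i \in T & forall j, j \in set0 -> exists i, f i = j].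
  by apply: pick4; rewrite ?sub0set ?cards0 //= hT.
have hr : forall i, (row (f i) W0 <= A)%MS by move=> i; move: (fT i); rewrite !inE.
have [c [c0 cW cw]] := dep_of_plane fi hr hA.
by have := W0code c0 cW; lia.
Qed.

Theorem mainTheorem14 : @is_m 'F_2 5 2 3 8.
Proof.
split; last exact: upper.
by exists K0; split; [exact: lower_adm | exact: lower_card].
Qed.
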